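(* Let $n\ge2$ be even, let $Q(x)=\sum_{i=1}^{n/2-1}Tr_1^n(x^{2^i+1})+Tr_1^{n/2}(x^{2^{n/2}+1})$ on $\mathbb{F}_{2^n}$, and let $f:\mathbb{F}_{2^n}\to\mathbb{F}_2$. Then $f$ is bent-negabent if and only if both $f$ and $f+Q$ are bent.
   Context: $Tr_1^m(z)=z+z^2+\dots+z^{2^{m-1}}$; $Tr=Tr_1^n$. Fix a self-dual basis $\{\alpha_i\}$ of $\mathbb{F}_{2^n}$ over $\mathbb{F}_2$ ($Tr(\alpha_i\alpha_j)=\delta_{ij}$), identify $\mathbb{F}_{2^n}$ with $\mathbb{F}_2^n$ via coordinates, and let $wt(x)$ be the number of nonzero coordinates. For $g:\mathbb{F}_{2^n}\to\mathbb{F}_2$: $g$ is bent if $\left|\sum_x(-1)^{g(x)+Tr(\mu x)}\right|=2^{n/2}$ for all $\mu$; negabent if $\left|\sum_x(-1)^{g(x)+Tr(\mu x)}\mathrm{i}^{wt(x)}\right|=2^{n/2}$ for all $\mu$ ($\mathrm{i}=\sqrt{-1}$); bent-negabent if both. *)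

(* Defs.v *)
From HB Require Import structures.
From mathcomp Require Import all_boot all_order all_algebra all_field.
Set Implicit Arguments. Unset Strict Implicit. Unset Printing Implicit Defensive.
Import Order.TTheory GRing.Theory Num.Theory.
Local Open Scope ring_scope.

Definition trm (F : finFieldType) (m : nat) (z : F) : F :=
  \sum_(i < m) z ^+ (2 ^ i).

(* Reading an element of F_2 (subset {0,1} of F) as a bit. *)
Definition tobit (F : finFieldType) (y : F) : bool := y != 0.

Definition self_dual (F : finFieldType) (n : nat) (alpha : 'I_n -> F) : Prop :=
  forall i j : 'I_n, trm n (alpha i * alpha j) = (i == j)%:R.

(* Coordinates of x in a self-dual basis are Tr(x alpha_i); wt = Hamming weight. *)
Definition wt (F : finFieldType) (n : nat) (alpha : 'I_n -> F) (x : F) : nat :=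
  #|[set i : 'I_n | tobit (trm n (x * alpha i))]|.

Definition sgn (b : bool) : algC := (-1) ^+ b.

Definition walsh (F : finFieldType) (n : nat) (g : F -> bool) (mu : F) : algC :=
  \sum_(x : F) sgn (g x (+) tobit (trm n (mu * x))).

Definition nega_walsh (F : finFieldType) (n : nat) (alpha : 'I_n -> F)
  (g : F -> bool) (mu : F) : algC :=
  \sum_(x : F) sgn (g x (+) tobit (trm n (mu * x))) * 'i ^+ wt alpha x.

Definition bent (F : finFieldType) (n : nat) (g : F -> bool) : Prop :=
  forall mu : F, `|walsh n g mu| = (2 ^ (n./2))%:R.

Definition negabent (F : finFieldType) (n : nat) (alpha : 'I_n -> F)
  (g : F -> bool) : Prop :=
  forall mu : F, `|nega_walsh alpha g mu| = (2 ^ (n./2))%:R.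

Definition bent_negabent (F : finFieldType) (n : nat) (alpha : 'I_n -> F)
  (g : F -> bool) : Prop := bent n g /\ negabent alpha g.

Definition Qpoly (F : finFieldType) (n : nat) (x : F) : F :=
  \sum_(1 <= i < n./2) trm n (x ^+ (2 ^ i + 1))
  + trm n./2 (x ^+ (2 ^ n./2 + 1)).

(* Main.v *)
Require Import Defs.
From HB Require Import structures.
From mathcomp Require Import all_boot all_order all_algebra all_field.
From mathcomp Require Import ring lra zify.
Set Implicit Arguments. Unset Strict Implicit. Unset Printing Implicit Defensive.
Import Order.TTheory GRing.Theory Num.Theory.
Local Open Scope ring_scope.

Local Close Scope ring_scope.
Lemma halfE a : a = odd a + 2 * a./2.
Proof. by rewrite -[LHS](odd_double_half a) -mul2n. Qed.

Lemma sq2_nat k : forall a b : nat, a * a + b * b = 2 * 4 ^ k -> a * a = 4 ^ k.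
Proof.
elim: k => [|k IH] a b.
  rewrite expn0 muln1 => h.
  have : a <= 1 by nia.
  have : b <= 1 by nia.
  by case: a h => [|[|a]] //; case: b => [|[|b]].
move=> h.
have ea := halfE a; have eb := halfE b.
move: h; rewrite expnS ea eb.
set a' := a./2; set b' := b./2; set Y := 4 ^ k.
case: (odd a); case: (odd b) => /= h.
- have : a' * a' + a' + b' * b' + b' = 2 * Y - 1 by nia.
  have : 0 < Y by rewrite /Y expn_gt0.
  set Z := a' * a' + a' + b' * b' + b'; lia.
- have : 1 + 4 * (a' * a' + a' + b' * b') = 8 * Y by nia.
  set Z := a' * a' + a' + b' * b'; lia.
- have : 1 + 4 * (a' * a' + b' * b' + b') = 8 * Y by nia.
  set Z := a' * a' + b' * b' + b'; lia.
- have h' : a' * a' + b' * b' = 2 * Y by nia.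
  have := IH _ _ h'. nia.
Qed.


Local Open Scope ring_scope.

Lemma sqr_intC (a : int) : (a%:~R : algC) ^+ 2 = ((`|a| * `|a|)%N)%:R.
Proof.
rewrite -rmorphXn /= -(real_normK (num_real a)) -abszE natrM -expr2.
by rewrite -[in RHS]rmorphXn.
Qed.

Lemma sq2_C (a b : int) k :
  (a%:~R : algC) ^+ 2 + (b%:~R) ^+ 2 = 2%:R * ((4 ^ k)%N)%:R -> (a%:~R : algC) ^+ 2 = ((4 ^ k)%N)%:R.
Proof.
rewrite !sqr_intC -natrD -natrM => /eqP; rewrite eqr_nat => /eqP h.
by rewrite (sq2_nat h).
Qed.

Lemma norm_mix (a b : algC) : a \is Num.real -> b \is Num.real ->
  `|(1 + 'i) / 2%:R * a + (1 - 'i) / 2%:R * b| ^+ 2 = (a ^+ 2 + b ^+ 2) / 2%:R.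
Proof.
move=> ra rb; rewrite normCK !rmorphD !rmorphM /= (conj_Creal ra) (conj_Creal rb).
rewrite !rmorphB !rmorphD /= fmorphV /= rmorph_nat conjCi ?rmorph1 ?conjC1.
apply/eqP; rewrite -subr_eq0; apply/eqP.
have -> : forall I : algC, ((1 + I) / 2%:R * a + (1 - I) / 2%:R * b) *
    ((1 - I) / 2%:R * a + (1 - - I) / 2%:R * b) - (a ^+ 2 + b ^+ 2) / 2%:R
    = (I ^+ 2 + 1) * (2%:R * a * b - a ^+ 2 - b ^+ 2) / 4%:R.
  by move=> I; field.
have hi : ('i : algC) ^+ 2 = -1 by exact: sqrCi.
by rewrite hi addNr !mul0r.
Qed.

Local Open Scope ring_scope.

Section Char2.
Variable F : finFieldType.
Variable n : nat.
Hypothesis ch2 : (2 \in [pchar F])%N.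
Hypothesis cardF : #|F| = (2 ^ n)%N.

Lemma two0 : (2%:R : F) = 0. Proof. exact: pcharf0 ch2. Qed.

Lemma addxx (x : F) : x + x = 0.
Proof. by rewrite -mulr2n -mulr_natr two0 mulr0. Qed.

Lemma oppF (x : F) : - x = x.
Proof. by apply: (addrI x); rewrite addrN addxx. Qed.

Lemma sqrD (x y : F) : (x + y) ^+ 2 = x ^+ 2 + y ^+ 2.
Proof. by rewrite sqrrD -mulr_natr two0 mulr0 addr0. Qed.

Lemma frobD (k : nat) (x y : F) : (x + y) ^+ (2 ^ k) = x ^+ (2 ^ k) + y ^+ (2 ^ k).
Proof. elim: k => [|k IH]; first by rewrite !expr1.
by rewrite expnS mulnC !exprM IH sqrD. Qed.

Lemma frobsum (k : nat) (I : Type) (r : seq I) (P : pred I) (G : I -> F) :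
  (\sum_(i <- r | P i) G i) ^+ (2 ^ k) = \sum_(i <- r | P i) G i ^+ (2 ^ k).
Proof.
apply: (big_morph (fun x => x ^+ (2 ^ k))); first exact: frobD.
by rewrite expr0n expn_eq0.
Qed.

Lemma frob_n (x : F) : x ^+ (2 ^ n) = x.
Proof. by rewrite -cardF expf_card. Qed.

Lemma frob_mul (a b : nat) (x : F) : x ^+ (2 ^ (a + b)) = (x ^+ (2 ^ a)) ^+ (2 ^ b).
Proof. by rewrite expnD exprM. Qed.

Definition T (z : F) := trm n z.

Lemma TD (x y : F) : T (x + y) = T x + T y.
Proof. by rewrite /T /trm -big_split /=; apply: eq_bigr => i _; rewrite frobD. Qed.

Lemma T0 : T 0 = 0.
Proof. by rewrite /T /trm big1 // => i _; rewrite expr0n expn_eq0. Qed.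

Lemma Tsum (I : Type) (r : seq I) (P : pred I) (G : I -> F) :
  T (\sum_(i <- r | P i) G i) = \sum_(i <- r | P i) T (G i).
Proof. exact: (big_morph T TD T0). Qed.

Lemma shift_sum (m : nat) (g : nat -> F) :
  \sum_(i < m) g i.+1 + g 0%N = \sum_(i < m) g i + g m.
Proof.
have h1 := big_ord_recl m (fun i : 'I_m.+1 => g i).
have h2 := big_ord_recr m (fun i : 'I_m.+1 => g i).
rewrite /= in h1 h2. by rewrite addrC -h1 h2.
Qed.

Lemma Tfrob1 (x : F) : T (x ^+ 2) = T x.
Proof.
rewrite /T /trm.
have := shift_sum n (fun i => x ^+ (2 ^ i)).
rewrite /= frob_n expr1 => /addIr <-.
by apply: eq_bigr => i _; rewrite -exprM expnS.
Qed.

Lemma Tfrob (k : nat) (x : F) : T (x ^+ (2 ^ k)) = T x.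
Proof. elim: k => [|k IH]; first by rewrite expr1.
by rewrite expnS mulnC exprM Tfrob1 IH. Qed.

Lemma Tsq (x : F) : T x ^+ 2 = T x.
Proof.
rewrite -{2}(Tfrob1 x) /T /trm.
have := frobsum 1 (index_enum 'I_n) xpredT (fun i : 'I_n => x ^+ (2 ^ i)).
rewrite expn1 => ->; apply: eq_bigr => i _.
by rewrite -!exprM mulnC.
Qed.

Lemma natr_xor (a b : bool) : (a%:R + b%:R : F) = (a (+) b)%:R.
Proof. by case: a; case: b; rewrite /= ?addr0 ?add0r // addxx. Qed.

Lemma natr_and (a b : bool) : (a%:R * b%:R : F) = (a && b)%:R.
Proof. by case: a; case: b; rewrite /= ?mulr0 ?mul0r ?mulr1. Qed.

Lemma tobit_nat (b : bool) : tobit (b%:R : F) = b.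
Proof. by case: b; rewrite /tobit /= ?oner_neq0 ?eqxx. Qed.

Lemma natr_odd (k : nat) : (k%:R : F) = (odd k)%:R.
Proof. elim: k => [//|k IH]; rewrite mulrS IH /=; case: (odd k) => /=; [exact: addxx | exact: addr0]. Qed.

Lemma tobit_natn (k : nat) : tobit (k%:R : F) = odd k.
Proof. by rewrite natr_odd tobit_nat. Qed.

Lemma bitE (z : F) : z ^+ 2 = z -> z = (tobit z)%:R.
Proof.
move=> h; rewrite /tobit; case: eqP => [-> //|/eqP nz] /=.
by apply: (mulfI nz); rewrite mulr1 -expr2.
Qed.

Lemma TnatM (b : bool) (z : F) : T (b%:R * z) = b%:R * T z.
Proof. by case: b; rewrite ?mul1r ?mul0r ?T0. Qed.

Lemma TE (z : F) : T z = (tobit (T z))%:R.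
Proof. exact/bitE/Tsq. Qed.

Lemma sgn_xor (a b : bool) : sgn (a (+) b) = sgn a * sgn b.
Proof. by case: a; case: b; rewrite /sgn /= ?expr0 ?expr1 ?mulr1 ?mul1r ?mulrNN ?mulr1. Qed.

Lemma tobitTD (x y : F) : tobit (T (x + y)) = tobit (T x) (+) tobit (T y).
Proof. by rewrite TD {1}(TE x) {1}(TE y) natr_xor tobit_nat. Qed.

Variable alpha : 'I_n -> F.
Hypothesis sd : self_dual alpha.

Definition co (x : F) (k : 'I_n) := tobit (T (x * alpha k)).

Lemma Tco x k : T (x * alpha k) = (co x k)%:R.
Proof. exact: TE. Qed.

Definition emb (S : {set 'I_n}) : F := \sum_(i in S) alpha i.

Lemma T_emb S j : T (emb S * alpha j) = (j \in S)%:R.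
Proof.
rewrite /emb mulr_suml Tsum.
rewrite (eq_bigr (fun i => (i == j)%:R)); last by move=> i _; exact: sd.
case: (boolP (j \in S)) => jS.
  by rewrite (bigD1 j) //= eqxx big1 ?addr0 // => i /andP[_ /negbTE ->].
by rewrite big1 // => i iS; case: eqP => // ij; move: jS; rewrite -ij iS.
Qed.

Lemma emb_inj : injective emb.
Proof.
move=> S S' h; apply/setP => j.
by rewrite -(tobit_nat (j \in S)) -(tobit_nat (j \in S')) -!T_emb h.
Qed.

Lemma expand (x : F) : x = \sum_k (co x k)%:R * alpha k.
Proof.
have cs : #|{set 'I_n}| = (2 ^ n)%N.
  transitivity #|powerset [set: 'I_n]|.
    by apply: eq_card => S; rewrite powersetE subsetT.
  by rewrite card_powerset cardsT card_ord.
have := @inj_card_onto _ _ emb emb_inj; rewrite cs cardF leqnn => /(_ isT x).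
case/codomP => S ->.
have co_S k : co (emb S) k = (k \in S) by rewrite /co T_emb tobit_nat.
rewrite [in LHS]/emb big_mkcond /=; apply: eq_bigr => k _.
by rewrite co_S; case: (k \in S); rewrite ?mul1r ?mul0r.
Qed.

Lemma T_mul_co x y : T (x * y) = (\sum_k (co x k && co y k) : nat)%:R.
Proof.
rewrite {1}(expand y) mulr_sumr Tsum natr_sum; apply: eq_bigr => k _.
by rewrite mulrCA TnatM Tco mulrC natr_and.
Qed.

Lemma coD x y k : co (x + y) k = co x k (+) co y k.
Proof. by rewrite /co mulrDl tobitTD. Qed.

Lemma wtE x : wt alpha x = (\sum_k (co x k : nat))%N.
Proof.
rewrite /wt -sum1_card big_mkcond /=; apply: eq_bigr => k _.
by rewrite inE /co /T; case: (tobit _).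
Qed.

Variable m : nat.
Hypothesis hn : n = (m + m)%N.
Hypothesis hm : (1 <= m)%N.


Lemma trmD k (x y : F) : trm k (x + y) = trm k x + trm k y.
Proof. by rewrite /trm -big_split /=; apply: eq_bigr => i _; rewrite frobD. Qed.

Lemma Tswap i (x y : F) : (i <= n)%N -> T (x * y ^+ (2 ^ i)) = T (x ^+ (2 ^ (n - i)) * y).
Proof.
move=> le; rewrite -(Tfrob (n - i)) exprMn -exprM -expnD subnKC //.
by rewrite frob_n.
Qed.

Lemma cross_i i (x y : F) : (i <= n)%N ->
  T ((x + y) ^+ (2 ^ i + 1)) = T (x ^+ (2 ^ i + 1)) + T (y ^+ (2 ^ i + 1))
    + (T (x ^+ (2 ^ i) * y) + T (x ^+ (2 ^ (n - i)) * y)).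
Proof.
move=> le; rewrite !addn1 !exprSr frobD !mulrDl !mulrDr !TD.
rewrite -(Tswap x y le) [_ * x]mulrC.
rewrite -!addrA; congr (_ + _); rewrite [RHS]addrC -!addrA; congr (_ + _).
by congr (T _ + _); rewrite mulrC.
Qed.

Lemma trm_split (z : F) : T z = trm m z + trm m (z ^+ (2 ^ m)).
Proof.
rewrite /T /trm hn big_split_ord /=; congr (_ + _).
by apply: eq_bigr => i _; rewrite -exprM -expnD.
Qed.

Lemma cross_m (x y : F) :
  trm m ((x + y) ^+ (2 ^ m + 1)) = trm m (x ^+ (2 ^ m + 1)) + trm m (y ^+ (2 ^ m + 1))
    + T (x ^+ (2 ^ m) * y).
Proof.
rewrite !addn1 !exprSr frobD !mulrDl !mulrDr !trmD.
rewrite (trm_split (x ^+ (2 ^ m) * y)).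
have -> : (x ^+ (2 ^ m) * y) ^+ (2 ^ m) = y ^+ (2 ^ m) * x.
  by rewrite exprMn -exprM -expnD -hn frob_n mulrC.
rewrite -!addrA; congr (_ + _); rewrite [RHS]addrC -!addrA; congr (_ + _).
Qed.

Lemma sumT_shift (x y : F) :
  \sum_(i < n) T (x ^+ (2 ^ i) * y) = T x * T y.
Proof.
by rewrite -Tsum -mulr_suml -[\sum_(i < n) _]/(T x) {1}(TE x) TnatM -(TE x).
Qed.

Lemma Qpolar (x y : F) :
  Qpoly n (x + y) = Qpoly n x + Qpoly n y + (T x * T y + T (x * y)).
Proof.
have hm2 : n./2 = m by rewrite hn addnn doubleK.
rewrite /Qpoly hm2.
set g := fun i => T (x ^+ (2 ^ i) * y).
have e1 : \sum_(1 <= i < m) T ((x + y) ^+ (2 ^ i + 1)) =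
   \sum_(1 <= i < m) T (x ^+ (2 ^ i + 1)) + \sum_(1 <= i < m) T (y ^+ (2 ^ i + 1))
   + (\sum_(1 <= i < m) g i + \sum_(1 <= i < m) g (n - i)%N).
  rewrite -!big_split /=; rewrite big_nat_cond [RHS]big_nat_cond.
  apply: eq_bigr => i /andP[/andP[_ lim] _]; apply: cross_i; lia.
have e2 : \sum_(1 <= i < m) g (n - i)%N = \sum_(m.+1 <= i < n) g i.
  rewrite big_nat_rev.
  have -> : (m.+1 = 1 + m)%N by lia.
  rewrite [in RHS]big_addn.
  have -> : (n - m = m)%N by lia.
  rewrite big_nat_cond [RHS]big_nat_cond; apply: eq_bigr => i /andP[/andP[h1 h2] _].
  congr g; lia.
have e3 : \sum_(i < n) g i = g 0%N + (\sum_(1 <= i < m) g i + g m + \sum_(m.+1 <= i < n) g i).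
  rewrite -(big_mkord (fun _ => true) g) big_ltn; last by lia.
  rewrite (@big_cat_nat _ _ _ m) /=; [|lia|lia].
  rewrite (@big_ltn _ _ _ m); last by lia.
  by rewrite !addrA.
have e4 : \sum_(i < n) g i = T x * T y := sumT_shift x y.
rewrite e1 cross_m.
have : T x * T y + T (x * y) = \sum_(1 <= i < m) g i + \sum_(1 <= i < m) g (n - i)%N + g m.
  rewrite -e4 e3 e2 /g expr1 -!addrA addrC -!addrA addrC -!addrA.
  by rewrite [T (x * y) + (T (x * y) + _)]addrA addxx add0r; ring.
move=> ->; rewrite /T /g.
set a1 := \sum_(1 <= i < m) _. set a2 := \sum_(1 <= i < m) _. set a3 := \sum_(1 <= i < m) _. set a4 := \sum_(1 <= i < m) _.
set b1 := trm m _. set b2 := trm m _. set b3 := trm n _. have -> : b3 = T (x ^+ (2 ^ m) * y) by []. ring.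
Qed.


Lemma hm2 : n./2 = m.
Proof. by rewrite hn addnn doubleK. Qed.

Lemma Q0 : Qpoly n (0 : F) = 0.
Proof.
rewrite /Qpoly big1 ?add0r; last by move=> i _; rewrite expr0n addn1 /= -[trm n 0]/(T 0) T0.
by rewrite expr0n addn1 /= /trm big1 // => i _; rewrite expr0n expn_eq0.
Qed.

Lemma sq_sum (I : Type) (r : seq I) (P : pred I) (G : I -> F) :
  (\sum_(i <- r | P i) G i) ^+ 2 = \sum_(i <- r | P i) G i ^+ 2.
Proof. by have := frobsum 1 r P G; rewrite expn1. Qed.

Lemma Qsq (x : F) : Qpoly n x ^+ 2 = Qpoly n x.
Proof.
rewrite /Qpoly hm2 sqrD sq_sum; congr (_ + _).
  by apply: eq_bigr => i _; exact: Tsq.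
set y := x ^+ (2 ^ m + 1).
have hy : y ^+ (2 ^ m) = y.
  by rewrite /y -exprM mulnDl mul1n -expnD -hn exprD frob_n addn1 exprS.
rewrite /trm sq_sum.
have := shift_sum m (fun i => y ^+ (2 ^ i)).
rewrite /= hy expr1 => /addIr <-.
by apply: eq_bigr => i _; rewrite -exprM expnS mulnC.
Qed.

Definition q (x : F) := tobit (Qpoly n x).
Definition t (x : F) := tobit (T x).

Lemma QE (x : F) : Qpoly n x = (q x)%:R.
Proof. exact/bitE/Qsq. Qed.

Lemma TtE (x : F) : T x = (t x)%:R.
Proof. exact: TE. Qed.

Lemma qD (x y : F) : q (x + y) = q x (+) q y (+) (t x && t y) (+) t (x * y).
Proof.
have := Qpolar x y.
rewrite (QE (x + y)) (QE x) (QE y) (TtE x) (TtE y) (TtE (x * y)) natr_and !natr_xor.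
by move/(congr1 (@tobit F)); rewrite !tobit_nat => ->; rewrite !addbA.
Qed.

Lemma tD (x y : F) : t (x + y) = t x (+) t y.
Proof. exact: tobitTD. Qed.

Lemma t0 : t (0 : F) = false.
Proof. by rewrite /t T0 /tobit eqxx. Qed.

Lemma q0 : q (0 : F) = false.
Proof. by rewrite /q Q0 /tobit eqxx. Qed.

Definition phi (x : F) : algC := 'i ^+ wt alpha x.
Definition psi (x : F) : algC := sgn (q x) * 'i ^+ t x.

Lemma hi : ('i : algC) ^+ 2 = -1.
Proof. exact: sqrCi. Qed.

Lemma sgn_sq b : sgn b * sgn b = 1.
Proof. by case: b; rewrite /sgn ?expr0 ?expr1 ?mulr1 ?mulrNN ?mulr1. Qed.

Lemma cntD (x y : F) :
  (wt alpha (x + y)%R + 2 * \sum_k ((co x k && co y k) : nat) = wt alpha x + wt alpha y)%N.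
Proof.
rewrite !wtE big_distrr /= -!big_split /=; apply: eq_bigr => k _.
by rewrite coD; case: (co x k); case: (co y k).
Qed.

Lemma phiD (x y : F) : phi (x + y) = phi x * phi y * sgn (t (x * y)).
Proof.
rewrite /phi /t T_mul_co tobit_natn.
set c := (\sum_k _)%N.
rewrite -exprD -cntD exprD exprM hi /sgn signr_odd -mulrA -expr2 -exprM.
by rewrite exprM sqrr_sign mulr1.
Qed.

Lemma psiD (x y : F) : psi (x + y) = psi x * psi y * sgn (t (x * y)).
Proof.
rewrite /psi qD tD.
move: (q x) (q y) (t x) (t y) (t (x * y)) => [] [] [] [] [];
  rewrite /sgn /= ?expr0 ?expr1 ?mulr1 ?mul1r ?mulrN1 ?mulN1r ?opprK ?mulrN ?mulNr ?opprK;
  rewrite -?expr2 ?hi ?opprK //.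
Qed.

Lemma sgn_neq0 b : sgn b != 0.
Proof. by rewrite /sgn signr_eq0. Qed.

Lemma psi_neq0 (x : F) : psi x != 0.
Proof. by rewrite /psi mulf_neq0 ?sgn_neq0 // expf_neq0 // neq0Ci. Qed.

Definition rho (x : F) := phi x / psi x.

Lemma rhoD (x y : F) : rho (x + y) = rho x * rho y.
Proof.
rewrite /rho phiD psiD.
have := psi_neq0 x; have := psi_neq0 y; have := sgn_neq0 (t (x * y)).
move=> h1 h2 h3; field.
by rewrite h1 h2 h3.
Qed.

Lemma wt0 : wt alpha 0 = 0%N.
Proof. by rewrite wtE big1 // => k _; rewrite /co mul0r T0 /tobit eqxx. Qed.

Lemma rho0 : rho 0 = 1.
Proof. by rewrite /rho /phi wt0 /psi q0 t0 /sgn !expr0 mulr1 divr1. Qed.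

Lemma rho_pm (x : F) : rho x = 1 \/ rho x = -1.
Proof.
have : rho x ^+ 2 == 1 by rewrite expr2 -rhoD addxx rho0.
by rewrite sqrf_eq1 => /orP[/eqP|/eqP]; [left|right].
Qed.

Definition cvec : F := \sum_k (rho (alpha k) != 1)%:R * alpha k.

Lemma m11 : ((-1 : algC) == 1) = false.
Proof. by rewrite -subr_eq0 -opprD oppr_eq0 -mulr2n mulrn_eq0 oner_eq0. Qed.

Lemma rho_char (x : F) : rho x = sgn (t (cvec * x)).
Proof.
have hT : T (cvec * x) = (\sum_k (((rho (alpha k) != 1%R) && co x k) : nat))%:R.
  rewrite /cvec mulr_suml Tsum natr_sum; apply: eq_bigr => k _.
  by rewrite -mulrA TnatM [alpha k * x]mulrC Tco natr_and.
rewrite /t hT tobit_natn /sgn signr_odd -prodrXr.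
rewrite {1}(expand x) (big_morph rho rhoD rho0).
apply: eq_bigr => k _.
case: (co x k); last by rewrite mul0r rho0 andbF expr0.
rewrite mul1r andbT; case: (rho_pm (alpha k)) => ->.
  by rewrite eqxx expr0.
by rewrite m11 expr1.
Qed.

Lemma phi_dec (x : F) : phi x = psi x * sgn (t (cvec * x)).
Proof. by rewrite -rho_char /rho mulrC divfK // psi_neq0. Qed.

Lemma i_bit (b : bool) : 'i ^+ b = (1 + 'i) / 2%:R + (1 - 'i) / 2%:R * sgn b :> algC.
Proof.
case: b; rewrite /sgn ?expr1 ?expr0; field; by rewrite ?pnatr_eq0.
Qed.

Lemma nega_dec (f : F -> bool) (u : F) :
  nega_walsh alpha f u = (1 + 'i) / 2%:R * walsh n (fun x => f x (+) tobit (Qpoly n x)) (u + cvec)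
    + (1 - 'i) / 2%:R * walsh n (fun x => f x (+) tobit (Qpoly n x)) (u + cvec + 1).
Proof.
rewrite /nega_walsh /walsh !mulr_sumr -big_split /=; apply: eq_bigr => x _.
rewrite -/(phi x) phi_dec /psi i_bit -/(q x) -!/(t _).
rewrite !mulrDl mul1r !tD !sgn_xor.
set a := sgn (f x); set b := sgn (q x); set c := sgn (t (u * x)); set d := sgn (t (cvec * x)).
rewrite mul1r; set e := sgn (t x).
by field.
Qed.

Definition wz (g : F -> bool) (mu : F) : int :=
  \sum_x (-1) ^+ (g x (+) tobit (trm n (mu * x))).

Lemma walshE (g : F -> bool) (mu : F) : walsh n g mu = (wz g mu)%:~R.
Proof.
rewrite /walsh /wz rmorph_sum; apply: eq_bigr => x _.
by rewrite /sgn rmorphXn rmorphN rmorph1.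
Qed.

Lemma walsh_real (g : F -> bool) (mu : F) : walsh n g mu \is Num.real.
Proof. by rewrite walshE realz. Qed.

Lemma e4 : (((2 ^ m)%N)%:R : algC) ^+ 2 = ((4 ^ m)%N)%:R.
Proof. by rewrite -natrX -expnM mulnC expnM. Qed.

Lemma bent_sq (g : F -> bool) : bent n g <-> forall mu, walsh n g mu ^+ 2 = ((4 ^ m)%N)%:R.
Proof.
rewrite /bent hm2; split => h mu.
  by rewrite -(real_normK (walsh_real g mu)) h e4.
apply/eqP; rewrite -(@eqrXn2 _ 2) ?normr_ge0 ?ler0n //.
by rewrite (real_normK (walsh_real g mu)) h e4.
Qed.

Lemma negabent_sq (f : F -> bool) :
  negabent alpha f <-> forall mu, `|nega_walsh alpha f mu| ^+ 2 = ((4 ^ m)%N)%:R.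
Proof.
rewrite /negabent hm2; split => h mu.
  by rewrite h e4.
apply/eqP; rewrite -(@eqrXn2 _ 2) ?normr_ge0 ?ler0n //.
by rewrite h e4.
Qed.

Lemma main (f : F -> bool) : bent_negabent alpha f <->
   (bent n f /\ bent n (fun x => f x (+) tobit (Qpoly n x))).
Proof.
set g := fun x => f x (+) tobit (Qpoly n x).
split.
- case=> bf /negabent_sq nb; split=> //; apply/bent_sq => mu.
  have := nb (mu + cvec).
  rewrite nega_dec -addrA addxx addr0 norm_mix ?walsh_real //.
  move/(congr1 (fun z => z * 2%:R)); rewrite divfK ?pnatr_eq0 // !walshE => h.
  by apply: (sq2_C (b := wz g (mu + 1))); rewrite h mulrC.
- case=> bf bg; split=> //; apply/negabent_sq => mu.
  rewrite nega_dec norm_mix ?walsh_real //.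
  rewrite !(proj1 (bent_sq g) bg).
  by field.
Qed.

End Char2.

Unset Implicit Arguments.

Theorem corollary1 (n : nat) (F : finFieldType) (alpha : 'I_n -> F)
  (f : F -> bool) :
  (2 <= n)%N -> ~~ odd n -> (2 \in [pchar F])%N -> #|F| = (2 ^ n)%N ->
  self_dual alpha ->
  (bent_negabent alpha f <->
   (bent n f /\ bent n (fun x => f x (+) tobit (Qpoly n x)))).
Proof.
move=> h2 hodd ch2 cardF sd.
have hn : n = (n./2 + n./2)%N.
  by rewrite addnn; move: (odd_double_half n); rewrite (negbTE hodd) add0n.
have hm : (1 <= n./2)%N.
  by move: h2; rewrite {1}hn; case: (n./2) => [|k] //.
exact: (main ch2 cardF sd hn hm f).
Qed.
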